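(* Let $n\geq 2$ and let $L=(a,b,c)$ be an arbitrary sequence of three positive integers such that $UD_n(L)\neq\emptyset$. Then $\rho_{n,L}>\alpha_n$, where $\alpha_2=1/6$ and $\alpha_n=(n-2)/n$ for $n>2$.
   Context: Let $X$ be a finite alphabet with $n\geq 2$ letters and $X^*$ the set of words over $X$; $|v|$ is the length of a word $v$. A code over $X$ is a finite sequence $C=(v_1,\ldots,v_m)$ of words over $X$ such that every $w\in X^*$ has at most one factorization into code-words: if $w=v_{i_1}\cdots v_{i_l}=v_{j_1}\cdots v_{j_{l'}}$ with $l,l'\geq1$, then $l=l'$ and $i_t=j_t$ for all $t$. (Codes are sequences, not sets.) A code $C=(v_1,\ldots,v_m)$ is a prefix code if for all $i,j$, $v_i$ is a prefix of $v_j$ if and only if $i=j$. For a finite sequence $L=(a_1,\ldots,a_m)$ of positive integers, $UD_n(L)$ is the set of all codes $(v_1,\ldots,v_m)$ over an $n$-letter alphabet with $|v_i|=a_i$ for all $i$, $PR_n(L)\subseteq UD_n(L)$ is the subset of prefix codes, and $\rho_{n,L}=|PR_n(L)|/|UD_n(L)|$ (defined when $UD_n(L)\ne\emptyset$). *)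

(* Defs.v *)
From mathcomp Require Import all_boot all_order all_algebra.
From mathcomp Require Import boolp.
Set Implicit Arguments. Unset Strict Implicit. Unset Printing Implicit Defensive.
Import Order.TTheory GRing.Theory Num.Theory.

Definition is_code (T : eqType) (C : seq (seq T)) : Prop :=
  forall s t : seq 'I_(size C), s != [::] -> t != [::] ->
    flatten (map (fun i : 'I_(size C) => nth [::] C i) s) =
    flatten (map (fun i : 'I_(size C) => nth [::] C i) t) -> s = t.

Definition is_prefix_code (T : eqType) (C : seq (seq T)) : Prop :=
  is_code C /\
  forall i j : 'I_(size C), prefix (nth [::] C i) (nth [::] C j) = (i == j).

(* Candidate codes with length sequence L = (a,b,c) over the alphabet 'I_n. *)
Definition words3 (n a b c : nat) : finType :=
  (a.-tuple 'I_n * b.-tuple 'I_n * c.-tuple 'I_n)%type.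

Definition seq_of3 (n a b c : nat) (x : words3 n a b c) : seq (seq 'I_n) :=
  [:: tval x.1.1; tval x.1.2; tval x.2].

Definition UD3 (n a b c : nat) : {set words3 n a b c} :=
  [set x | `[< is_code (seq_of3 x) >] ].

Definition PR3 (n a b c : nat) : {set words3 n a b c} :=
  [set x | `[< is_prefix_code (seq_of3 x) >] ].

Definition rho3 (n a b c : nat) : rat :=
  (#|PR3 n a b c|%:R / #|UD3 n a b c|%:R)%R.

Definition alpha (n : nat) : rat :=
  if n == 2 then (1 / 6)%R else ((n - 2)%:R / n%:R)%R.

(* Main.v *)
Require Import Defs.
From mathcomp Require Import all_boot all_order all_algebra.
From mathcomp Require Import boolp zify lra.
Import Order.TTheory GRing.Theory Num.Theory.
Set Implicit Arguments. Unset Strict Implicit.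

Lemma cat_prefix_cases (T : eqType) (u v X Y : seq T) :
  u ++ X = v ++ Y -> prefix u v || prefix v u.
Proof.
move=> e; case: (leqP (size u) (size v)) => h.
  apply/orP; left; rewrite prefixE.
  have: take (size u) (u ++ X) = take (size u) (v ++ Y) by rewrite e.
  by rewrite take_size_cat // takel_cat // => <-.
apply/orP; right; rewrite prefixE.
have: take (size v) (u ++ X) = take (size v) (v ++ Y) by rewrite e.
by rewrite (take_size_cat _ (erefl _)) takel_cat ?(ltnW h) // => ->.
Qed.

Lemma code_of_prefix_free (T : eqType) (C : seq (seq T)) :
  (forall i : 'I_(size C), nth [::] C i != [::]) ->
  (forall i j : 'I_(size C), prefix (nth [::] C i) (nth [::] C j) -> i = j) ->
  is_code C.
Proof.
move=> ne pf s; elim: s => [|i s IH] [|j t] //= _ _ e.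
have hij : i = j.
  by case/orP: (cat_prefix_cases e) => /pf.
subst j; move/eqP: e; rewrite eqseq_cat // eqxx /= => /eqP e.
case: s IH e => [|i' s] IH; case: t => [|j' t] //= e.
- by move: e; case: (nth [::] C j') (ne j').
- by move: e; case: (nth [::] C i') (ne i').
- by congr (_ :: _); apply: IH.
Qed.

Lemma code_perm3 (T : eqType) (u0 u1 u2 w0 w1 w2 : seq T) (g : 'I_3 -> 'I_3) :
  injective g ->
  (forall i : 'I_3, nth [::] [:: w0; w1; w2] i = nth [::] [:: u0; u1; u2] (g i)) ->
  is_code [:: u0; u1; u2] -> is_code [:: w0; w1; w2].
Proof.
move=> ig hn hc s t ns nt e.
have := hc (map g s) (map g t).
rewrite -!map_comp.
have E : forall r : seq 'I_3, map (nth [::] [:: u0; u1; u2] \o g) r =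
   map (fun i : 'I_3 => nth [::] [:: w0; w1; w2] i) r.
  by move=> r; apply: eq_map => i /=; rewrite hn.
rewrite !E => /(_ _ _ e) h; apply: (inj_map ig); apply: h.
  by case: (s) ns.
by case: (t) nt.
Qed.

Lemma pcode_perm3 (T : eqType) (u0 u1 u2 w0 w1 w2 : seq T) (g : 'I_3 -> 'I_3) :
  injective g ->
  (forall i : 'I_3, nth [::] [:: w0; w1; w2] i = nth [::] [:: u0; u1; u2] (g i)) ->
  is_prefix_code [:: u0; u1; u2] -> is_prefix_code [:: w0; w1; w2].
Proof.
move=> ig hn [hc hp]; split; first exact: (code_perm3 ig hn hc).
by move=> i j; rewrite !hn; rewrite hp (inj_eq ig).
Qed.

Definition g12 (i : 'I_3) : 'I_3 :=
  inord (match val i with 0 => 1 | 1 => 0 | k => k end).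
Definition g23 (i : 'I_3) : 'I_3 :=
  inord (match val i with 1 => 2 | 2 => 1 | k => k end).

Lemma g12_inj : injective g12.
Proof.
move=> [[|[|[|i]]] Hi] [[|[|[|j]]] Hj] //; rewrite /g12 /= => /(congr1 (@nat_of_ord 3));
  by rewrite !inordK // => E; apply/val_inj.
Qed.
Lemma g23_inj : injective g23.
Proof.
move=> [[|[|[|i]]] Hi] [[|[|[|j]]] Hj] //; rewrite /g23 /= => /(congr1 (@nat_of_ord 3));
  by rewrite !inordK // => E; apply/val_inj.
Qed.

Lemma g12_nth (T : Type) (u0 u1 u2 : seq T) (i : 'I_3) :
  nth [::] [:: u1; u0; u2] i = nth [::] [:: u0; u1; u2] (g12 i).
Proof. by case: i => [[|[|[|i]]] Hi] //; rewrite /g12 /= inordK. Qed.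
Lemma g23_nth (T : Type) (u0 u1 u2 : seq T) (i : 'I_3) :
  nth [::] [:: u0; u2; u1] i = nth [::] [:: u0; u1; u2] (g23 i).
Proof. by case: i => [[|[|[|i]]] Hi] //; rewrite /g23 /= inordK. Qed.

Definition f12 n a b c (x : words3 n a b c) : words3 n b a c := ((x.1.2, x.1.1), x.2).
Definition f23 n a b c (x : words3 n a b c) : words3 n a c b := ((x.1.1, x.2), x.1.2).

Lemma f12_inj n a b c : injective (@f12 n a b c).
Proof. by move=> [[? ?] ?] [[? ?] ?] [-> -> ->]. Qed.
Lemma f23_inj n a b c : injective (@f23 n a b c).
Proof. by move=> [[? ?] ?] [[? ?] ?] [-> -> ->]. Qed.

Lemma UD_le12 n a b c : #|UD3 n a b c| <= #|UD3 n b a c|.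
Proof.
rewrite -(card_imset _ (@f12_inj n a b c)); apply: subset_leq_card.
apply/subsetP => y /imsetP [x]; rewrite !inE => /asboolP h ->.
apply/asboolP; exact: (code_perm3 g12_inj (g12_nth _ _ _) h).
Qed.
Lemma PR_le12 n a b c : #|PR3 n a b c| <= #|PR3 n b a c|.
Proof.
rewrite -(card_imset _ (@f12_inj n a b c)); apply: subset_leq_card.
apply/subsetP => y /imsetP [x]; rewrite !inE => /asboolP h ->.
apply/asboolP; exact: (pcode_perm3 g12_inj (g12_nth _ _ _) h).
Qed.
Lemma UD_le23 n a b c : #|UD3 n a b c| <= #|UD3 n a c b|.
Proof.
rewrite -(card_imset _ (@f23_inj n a b c)); apply: subset_leq_card.
apply/subsetP => y /imsetP [x]; rewrite !inE => /asboolP h ->.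
apply/asboolP; exact: (code_perm3 g23_inj (g23_nth _ _ _) h).
Qed.
Lemma PR_le23 n a b c : #|PR3 n a b c| <= #|PR3 n a c b|.
Proof.
rewrite -(card_imset _ (@f23_inj n a b c)); apply: subset_leq_card.
apply/subsetP => y /imsetP [x]; rewrite !inE => /asboolP h ->.
apply/asboolP; exact: (pcode_perm3 g23_inj (g23_nth _ _ _) h).
Qed.

Lemma UD12 n a b c : #|UD3 n a b c| = #|UD3 n b a c|.
Proof. by apply/eqP; rewrite eqn_leq !UD_le12. Qed.
Lemma PR12 n a b c : #|PR3 n a b c| = #|PR3 n b a c|.
Proof. by apply/eqP; rewrite eqn_leq !PR_le12. Qed.
Lemma UD23 n a b c : #|UD3 n a b c| = #|UD3 n a c b|.
Proof. by apply/eqP; rewrite eqn_leq !UD_le23. Qed.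
Lemma PR23 n a b c : #|PR3 n a b c| = #|PR3 n a c b|.
Proof. by apply/eqP; rewrite eqn_leq !PR_le23. Qed.

Lemma card_dep_prod (T1 T2 : finType) (P : pred T1) (Q : T1 -> pred T2) m :
  (forall y, P y -> m <= #|[set z | Q y z]|) ->
  #|[set y | P y]| * m <= #|[set x : T1 * T2 | P x.1 && Q x.1 x.2]|.
Proof.
move=> h.
have -> : #|[set x : T1 * T2 | P x.1 && Q x.1 x.2]| =
   \sum_(y | P y) #|[set z | Q y z]|.
  rewrite -sum1_card big_mkcond /=.
  rewrite (eq_bigr (fun p => (fun y z => if P y && Q y z then 1 else 0) p.1 p.2)); last first.
    by move=> p _; rewrite inE.
  rewrite -(pair_bigA _ (fun y z => if P y && Q y z then 1 else 0)) /=.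
  rewrite [RHS]big_mkcond /=; apply: eq_bigr => y _.
  case: (P y) => /=; last by rewrite big1.
  by rewrite -sum1_card [RHS]big_mkcond /=; apply: eq_bigr => z _; rewrite inE.
rewrite -sum1_card big_distrl /=.
rewrite (eq_bigl (fun y => P y)); last by move=> y; rewrite inE.
by apply: leq_sum => y Py; rewrite mul1n h.
Qed.

Lemma card_words3 n a b c : #|{: words3 n a b c}| = n ^ a * n ^ b * n ^ c.
Proof. by rewrite /words3 !card_prod !card_tuple card_ord. Qed.

Lemma card_ext n c (u : seq 'I_n) :
  #|[set z : c.-tuple 'I_n | prefix u z]| <= n ^ (c - size u).
Proof.
have -> : n ^ (c - size u) = #|{: (c - size u).-tuple 'I_n}| by rewrite card_tuple card_ord.
rewrite -(@card_in_imset _ _ (fun z : c.-tuple 'I_n => [tuple of drop (size u) z])).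
  by apply: subset_leq_card; apply/subsetP.
move=> z1 z2; rewrite !inE => /prefixP [w1 e1] /prefixP [w2 e2] /(congr1 val) /=.
move=> E; apply/val_inj; rewrite /= e1 e2; congr (_ ++ _).
by move: E; rewrite e1 e2 !drop_size_cat.
Qed.

Lemma card_pref_pairs n a b :
  a <= b -> #|[set y : a.-tuple 'I_n * b.-tuple 'I_n | prefix y.1 y.2]| <= n ^ b.
Proof.
move=> ab.
have -> : n ^ b = #|{: b.-tuple 'I_n}| by rewrite card_tuple card_ord.
rewrite -(@card_in_imset _ _ (fun y : a.-tuple 'I_n * b.-tuple 'I_n => y.2)).
  by apply: subset_leq_card; apply/subsetP.
move=> [y1 y2] [z1 z2]; rewrite !inE /= => p1 p2 e; subst z2; congr (_, _).
apply/val_inj; move: p1 p2; rewrite !prefixE !size_tuple => /eqP E1 /eqP E2.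
exact: (etrans (esym E1) E2).
Qed.

Lemma prefix_rev_size (T : eqType) (u v : seq T) :
  size u <= size v -> prefix v u -> prefix u v.
Proof.
move=> suv pvu; have := size_prefix pvu => svu.
have es : size v = size u by apply/eqP; rewrite eqn_leq svu suv.
move: pvu; rewrite prefixE es take_size => /eqP ->; exact: prefix_refl.
Qed.

Lemma pf3 (T : eqType) (u v w : seq T) :
  size u <= size v -> size v <= size w ->
  ~~ prefix u v -> ~~ prefix u w -> ~~ prefix v w ->
  forall i j : 'I_3, prefix (nth [::] [:: u; v; w] i) (nth [::] [:: u; v; w] j) = (i == j).
Proof.
move=> s1 s2 p1 p2 p3.
have p4 : ~~ prefix v u by apply: contra p1; apply: prefix_rev_size.
have p5 : ~~ prefix w u.
  by apply: contra p2; apply: prefix_rev_size; apply: leq_trans s2.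
have p6 : ~~ prefix w v by apply: contra p3; apply: prefix_rev_size.
move=> [[|[|[|i]]] Hi] [[|[|[|j]]] Hj] //=; rewrite -val_eqE /= ?prefix_refl //;
  exact/negbTE.
Qed.

Lemma pcode3 (T : eqType) (u v w : seq T) :
  0 < size u -> size u <= size v -> size v <= size w ->
  ~~ prefix u v -> ~~ prefix u w -> ~~ prefix v w ->
  is_prefix_code [:: u; v; w].
Proof.
move=> s0 s1 s2 p1 p2 p3; have H := pf3 s1 s2 p1 p2 p3; split => //.
apply: code_of_prefix_free.
  move=> [[|[|[|i]]] Hi] //=; rewrite -size_eq0 -lt0n //.
  - exact: leq_trans s1.
  - exact: leq_trans (leq_trans s1 s2).
by move=> i j; rewrite H => /eqP.
Qed.

Lemma PR_lb n a b c : 0 < a -> a <= b -> b <= c ->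
  (n ^ a * n ^ b - n ^ b) * (n ^ c - n ^ (c - a) - n ^ (c - b)) <= #|PR3 n a b c|.
Proof.
move=> a0 ab bc.
pose P := fun y : a.-tuple 'I_n * b.-tuple 'I_n => ~~ prefix y.1 y.2.
pose Q := fun (y : a.-tuple 'I_n * b.-tuple 'I_n) (z : c.-tuple 'I_n) =>
   ~~ prefix y.1 z && ~~ prefix y.2 z.
apply: leq_trans (_ : #|[set x : words3 n a b c | P x.1 && Q x.1 x.2]| <= _); last first.
  apply: subset_leq_card; apply/subsetP => [[[u v] w]]; rewrite !inE /P /Q /=.
  move=> /andP [p1 /andP [p2 p3]]; apply/asboolP; rewrite /seq_of3 /=.
  by apply: pcode3; rewrite ?size_tuple.
apply: leq_trans (@card_dep_prod _ _ P Q (n ^ c - n ^ (c - a) - n ^ (c - b)) _); last first.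
  move=> [u v] /= _.
  set A1 := [set z : c.-tuple 'I_n | prefix u z].
  set A2 := [set z : c.-tuple 'I_n | prefix v z].
  have -> : [set z | Q (u, v) z] = ~: (A1 :|: A2).
    by apply/setP => z; rewrite !inE /Q /= negb_or.
  have h1 : #|A1| <= n ^ (c - a) by have := card_ext c (val u); rewrite size_tuple.
  have h2 : #|A2| <= n ^ (c - b) by have := card_ext c (val v); rewrite size_tuple.
  have := cardsC (A1 :|: A2); rewrite card_tuple card_ord => E.
  have := cardsU A1 A2; rewrite -/A1 -/A2 => E2.
  have : #|A1 :|: A2| <= n ^ (c - a) + n ^ (c - b).
    by rewrite E2; apply: leq_trans (leq_subr _ _) _; apply: leq_add.
  by move=> H; rewrite -E -subnDA leq_subLR; apply: leq_add H (leqnn _).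
apply: leq_mul => //.
set A := [set y : a.-tuple 'I_n * b.-tuple 'I_n | prefix y.1 y.2].
have -> : [set y | P y] = ~: A by apply/setP => y; rewrite !inE.
have := cardsC A; rewrite card_prod !card_tuple card_ord => E.
have := card_pref_pairs n ab; rewrite -/A; lia.
Qed.

Lemma UD_bad n a b c (T' : finType) (h : T' -> words3 n a b c) :
  injective h -> (forall y, ~ is_code (seq_of3 (h y))) ->
  #|UD3 n a b c| + #|T'| <= n ^ a * n ^ b * n ^ c.
Proof.
move=> ih hn.
have sub : UD3 n a b c \subset ~: (h @: setT).
  apply/subsetP => x; rewrite !inE => /asboolP hx; apply/imsetP => [[y _ e]].
  by apply: (hn y); rewrite -e.
have := cardsC (h @: setT); rewrite card_imset // cardsT card_words3 => <-.
by rewrite addnC leq_add2l subset_leq_card.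
Qed.

Lemma nc_eq01 (T : eqType) (u w : seq T) : ~ is_code [:: u; u; w].
Proof.
move=> hc; have := hc [:: @Ordinal 3 0 erefl] [:: @Ordinal 3 1 erefl] erefl erefl erefl.
by case.
Qed.

Lemma flatten_nseq1 (T : Type) (l : T) c : flatten (nseq c [:: l]) = nseq c l.
Proof. by elim: c => //= c ->. Qed.

Lemma nc_pow (T : eqType) (l : T) (u : seq T) c : 0 < c -> ~ is_code [:: [:: l]; u; nseq c l].
Proof.
case: c => // c _ hc.
have := hc [:: @Ordinal 3 2 erefl] (nseq c.+1 (@Ordinal 3 0 erefl)) erefl erefl.
rewrite map_nseq /= flatten_nseq1 cats0 => /(_ erefl); by case.
Qed.

Lemma nc_sq (T : eqType) (u w : seq T) : ~ is_code [:: u; u ++ u; w].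
Proof.
move=> hc; have := hc [:: @Ordinal 3 1 erefl] [:: @Ordinal 3 0 erefl; @Ordinal 3 0 erefl] erefl erefl.
by rewrite /= !cats0 => /(_ erefl).
Qed.

Lemma bad_eq n a c : #|UD3 n a a c| + n ^ a * n ^ c <= n ^ a * n ^ a * n ^ c.
Proof.
have -> : n ^ a * n ^ c = #|{: a.-tuple 'I_n * c.-tuple 'I_n}|.
  by rewrite card_prod !card_tuple card_ord.
apply: (@UD_bad n a a c _ (fun y => ((y.1, y.1), y.2))).
  by move=> [? ?] [? ?] [-> _ ->].
by move=> y; apply: nc_eq01.
Qed.

Lemma bad_eq1 n c : 2 <= n -> 0 < c ->
  #|UD3 n 1 1 c| + (n ^ 1 * n ^ c).+1 <= n ^ 1 * n ^ 1 * n ^ c.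
Proof.
move=> hn c0.
pose l0 : 'I_n := Ordinal (ltnW hn). pose l1 : 'I_n := Ordinal hn.
have -> : (n ^ 1 * n ^ c).+1 = #|{: option (1.-tuple 'I_n * c.-tuple 'I_n)}|.
  by rewrite card_option card_prod !card_tuple card_ord.
pose h := fun y : option (1.-tuple 'I_n * c.-tuple 'I_n) =>
  match y with
  | Some y => ((y.1, y.1), y.2)
  | None => (([tuple l0], [tuple l1]), nseq_tuple c l0)
  end : words3 n 1 1 c.
apply: (@UD_bad n 1 1 c _ h).
  move=> [[? ?]|] [[? ?]|] //=; first by case=> -> _ ->.
  - by case=> E1 E2 _; move: (etrans (esym E1) E2) => /(congr1 val) /= [].
  - by case=> E1 E2 _; move: (etrans E1 (esym E2)) => /(congr1 val) /= [].
move=> [y|] /=; first exact: nc_eq01.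
exact: nc_pow.
Qed.

Lemma bad_12 c : 0 < c -> #|UD3 2 1 2 c| + (2 ^ 1 * 2 ^ c).+1 <= 2 ^ 1 * 2 ^ 2 * 2 ^ c.
Proof.
move=> c0.
pose l0 : 'I_2 := ord0. pose l1 : 'I_2 := ord_max.
have -> : (2 ^ 1 * 2 ^ c).+1 = #|{: option (1.-tuple 'I_2 * c.-tuple 'I_2)}|.
  by rewrite card_option card_prod !card_tuple card_ord.
pose h := fun y : option (1.-tuple 'I_2 * c.-tuple 'I_2) =>
  match y with
  | Some y => ((y.1, [tuple of y.1 ++ y.1]), y.2)
  | None => (([tuple l0], [tuple l0; l1]), nseq_tuple c l0)
  end : words3 2 1 2 c.
apply: (@UD_bad 2 1 2 c _ h).
  move=> [[v ?]|] [[? ?]|] //=; first by case=> -> _ ->.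
  - by case=> -> /= [].
  - by case=> <- /= [].
move=> [y|] /=; first exact: nc_sq.
exact: nc_pow.
Qed.

Lemma tval1 (T : Type) (t : 1.-tuple T) : exists l, tval t = [:: l].
Proof. by case: t => [[|l [|]]] //= _; exists l. Qed.

Lemma I2_other (l1 l2 l : 'I_2) : l1 != l2 -> l != l1 -> l = l2.
Proof.
move: l1 l2 l => [[|[|?]] ?] [[|[|?]] ?] [[|[|?]] ?] //= _ _; exact/val_inj.
Qed.

Lemma bad_11 c : 0 < c -> #|UD3 2 1 1 c| = 0.
Proof.
move=> c0; apply/eqP; rewrite cards_eq0; apply/eqP/setP => [[[v1 v2] v3]].
rewrite !inE; apply/asboolP => hc; move: hc; rewrite /seq_of3 /=.
have [l1 e1] := tval1 v1; have [l2 e2] := tval1 v2; rewrite e1 e2.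
case: (eqVneq l1 l2) => [<-|ne]; first exact: nc_eq01.
move=> hc.
pose t := map (fun l => if l == l1 then @Ordinal 3 0 erefl else @Ordinal 3 1 erefl) (tval v3).
have := hc [:: @Ordinal 3 2 erefl] t erefl.
have tn : t != [::] by rewrite -size_eq0 size_map size_tuple -lt0n.
move=> /(_ tn).
have -> : flatten [seq nth [::] [:: [:: l1]; [:: l2]; tval v3] i | i : 'I_3 <- t] = tval v3.
  rewrite /t -map_comp -[RHS]flatten_seq1; congr flatten; apply: eq_map => l /=.
  case: eqP => [->|/eqP nl] //=; by rewrite (I2_other ne nl).
rewrite /= cats0 => /(_ erefl).
rewrite /t; case: (tval v3) tn => [|l s] //= _ [].
by case: (l == l1).
Qed.

Lemma gen_k k1 k2 W Q P U R : 1 <= W -> 1 <= Q -> 1 <= P ->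
  k1*(Q*(W+1)*(W+1)) + k2*W < k2*(Q*W*W) ->
  U <= (W+1)*(Q*(W+1))*(P*Q*(W+1)) ->
  ((W+1)*(Q*(W+1)) - Q*(W+1))*(P*Q*(W+1) - P*Q - P) <= R -> k1*U < k2*R.
Proof.
move=> hW hQ hP k0 hU hR.
set X := W + 1.
have eX : X - 1 = W by rewrite /X addnK.
have e0 : (X-1)*(Q*X-Q-1) = Q*W*W - W.
  rewrite eX /X mulnDr muln1 addnK mulnBr muln1; lia.
have k : k1*(Q*X*X) < k2*((X-1)*(Q*X-Q-1)).
  rewrite e0 mulnBr; have : W <= Q*W*W by nia. lia.
have hX : 2 <= X by rewrite /X; lia.
have e1 : X*(Q*X) - Q*X = Q*X*(X-1) by rewrite mulnBr muln1 mulnC.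
have e2 : P*Q*X - P*Q - P = P*(Q*X-Q-1) by rewrite !mulnBr muln1 mulnA.
rewrite e1 e2 in hR.
have : P*Q*X*(k1*(Q*X*X)) < P*Q*X*(k2*((X-1)*(Q*X-Q-1))).
  by rewrite ltn_pmul2l // !muln_gt0 hP hQ; apply: leq_trans hX.
have h1 : k1 * U <= k1 * (X*(Q*X)*(P*Q*X)) by rewrite leq_mul2l hU orbT.
have h2 : k2 * (Q*X*(X-1) * (P*(Q*X-Q-1))) <= k2 * R by rewrite leq_mul2l hR orbT.
have e3 : k1 * (X*(Q*X)*(P*Q*X)) = P*Q*X*(k1*(Q*X*X)) by lia.
have e4 : k2 * (Q*X*(X-1) * (P*(Q*X-Q-1))) = P*Q*X*(k2*((X-1)*(Q*X-Q-1))) by lia.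
clearbody X; lia.
Qed.

Lemma key1 W Q : 3 <= W -> 1 <= Q -> 1*(Q*(W+1)*(W+1)) + 6*W < 6*(Q*W*W).
Proof.
move=> hW hQ.
have h1 : Q*W*3 <= Q*W*W by rewrite leq_mul2l hW orbT.
have h2 : 3 * W <= Q * W * 3 by nia.
nia.
Qed.

Lemma key2 Q : 4 <= Q -> 1*(Q*(1+1)*(1+1)) + 6*1 < 6*(Q*1*1).
Proof. lia. Qed.

Lemma key3 m W Q : m + 2 <= W -> m + 3 <= Q ->
  (m+1)*(Q*(W+1)*(W+1)) + (m+3)*W < (m+3)*(Q*W*W).
Proof.
move=> hW hQ.
have h1 : Q*W*(m+2) <= Q*W*W by rewrite leq_mul2l hW orbT.
have h2 : (m+2)*Q <= W*Q by rewrite leq_mul2r hW orbT.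
have h3 : (m+3)*W <= Q*W by rewrite leq_mul2r hQ orbT.
have h4 : 0 < Q by lia.
nia.
Qed.

Lemma eqcase m W P U R : m + 3 <= W -> 1 <= P ->
  U + (W+1)*(P*(W+1)) <= (W+1)*(W+1)*(P*(W+1)) ->
  ((W+1)*(W+1) - (W+1))*(P*(W+1) - P - P) <= R -> (m+3-2)*U < (m+3)*R.
Proof.
move=> hW hP hU hR.
set X := W + 1.
have eU : X*X*(P*X) = X*(P*X) + P*X*X*W by rewrite /X; lia.
have hU' : U <= P*X*X*W by lia.
have eR1 : X*X - X = X*W by rewrite /X; lia.
have eR2 : P*X - P - P = P*(W-1) by rewrite /X mulnBr muln1 mulnDr muln1; lia.
rewrite eR1 eR2 in hR.
have k : (m+1)*X < (m+3)*(W-1) by rewrite /X; lia.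
have : P*X*W*((m+1)*X) < P*X*W*((m+3)*(W-1)).
  by rewrite ltn_pmul2l // !muln_gt0 /X; lia.
have h1 : (m+1)*U <= (m+1)*(P*X*X*W) by rewrite leq_mul2l hU' orbT.
have h2 : (m+3)*(X*W*(P*(W-1))) <= (m+3)*R by rewrite leq_mul2l hR orbT.
have e3 : (m+1)*(P*X*X*W) = P*X*W*((m+1)*X) by lia.
have e4 : (m+3)*(X*W*(P*(W-1))) = P*X*W*((m+3)*(W-1)) by lia.
have e5 : m+3-2 = m+1 by lia.
rewrite e5; clearbody X; lia.
Qed.

Lemma eqcase1 m P U R : 1 <= P ->
  U + ((m+3)*(P*(m+3))).+1 <= (m+3)*(m+3)*(P*(m+3)) ->
  ((m+3)*(m+3) - (m+3))*(P*(m+3) - P - P) <= R -> (m+3-2)*U < (m+3)*R.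
Proof.
move=> hP hU hR.
set X := m + 3.
have eR1 : X*X - X = X*(m+2) by rewrite /X; lia.
have eR2 : P*X - P - P = P*(m+1) by rewrite /X; lia.
rewrite eR1 eR2 in hR.
have eU : X*X*(P*X) = X*(P*X) + P*X*X*(m+2) by rewrite /X; lia.
have hU' : U < P*X*X*(m+2) by lia.
have h1 : (m+1)*U < (m+1)*(P*X*X*(m+2)) by rewrite ltn_pmul2l; [exact: hU' | rewrite addn1].
have h2 : X*(X*(m+2)*(P*(m+1))) <= X*R by rewrite leq_mul2l hR orbT.
have e3 : (m+1)*(P*X*X*(m+2)) = X*(X*(m+2)*(P*(m+1))) by lia.
have e5 : m + 3 - 2 = m + 1 by lia.
rewrite e5 -/X; clearbody X; lia.
Qed.

Lemma rho_of_nat n a b c : 2 <= n -> 0 < #|UD3 n a b c| ->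
  (if n == 2 then 1 * #|UD3 n a b c| < 6 * #|PR3 n a b c|
   else (n-2) * #|UD3 n a b c| < n * #|PR3 n a b c|) -> (alpha n < rho3 n a b c)%R.
Proof.
move=> hn hu; rewrite /rho3 /alpha.
set u := #|UD3 n a b c|; set p := #|PR3 n a b c|.
rewrite ltr_pdivlMr ?ltr0n //.
case: eqP => [_|ne] h.
  have : ((u%:R : rat) < 6%:R * p%:R)%R by rewrite -natrM ltr_nat -(mul1n u).
  lra.
rewrite mulrAC ltr_pdivrMr ?ltr0n; last by apply: leq_trans hn.
by rewrite -!natrM ltr_nat [p * n]mulnC.
Qed.

Lemma main_sorted n a b c : 2 <= n -> 0 < a -> a <= b -> b <= c ->
  0 < #|UD3 n a b c| -> (alpha n < rho3 n a b c)%R.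
Proof.
move=> hn a0 ab bc hu; apply: rho_of_nat => //.
have eb : n ^ b = n ^ (b - a) * n ^ a by rewrite -expnD subnK.
have ec : n ^ c = n ^ (c - b) * n ^ (b - a) * n ^ a by rewrite -mulnA -eb -expnD subnK.
have eca : n ^ (c - a) = n ^ (c - b) * n ^ (b - a).
  by rewrite -expnD; congr (_ ^ _); clear -ab bc; lia.
have n0 : 0 < n by clear -hn; lia.
have Pp : 1 <= n ^ (c - b) by rewrite expn_gt0 n0.
have Qp : 1 <= n ^ (b - a) by rewrite expn_gt0 n0.
have Xn : n <= n ^ a by rewrite -{1}(expn1 n) leq_pexp2l.
set U := #|UD3 n a b c|; set R := #|PR3 n a b c|.
have hPR : (n ^ a * n ^ b - n ^ b) * (n ^ c - n ^ (c - a) - n ^ (c - b)) <= R.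
  exact: PR_lb.
have hN : U <= n ^ a * n ^ b * n ^ c by rewrite -card_words3 max_card.
case: eqP => [n2|nn2].
  subst n.
  case: (leqP 2 a) => [a2|a1].
    have X4 : 4 <= 2 ^ a by rewrite -[4]/(2 ^ 2) leq_pexp2l.
    rewrite ec eb eca in hPR hN.
    set X := 2 ^ a in X4 hPR hN *; set Q := 2 ^ (b - a) in Qp hPR hN *.
    set P := 2 ^ (c - b) in Pp hPR hN *.
    have eX : X = (X - 1) + 1 by clear -X4; lia.
    rewrite eX in hPR hN.
    apply: (gen_k _ Qp Pp _ hN hPR) => //; first by clear -X4; lia.
    by apply: key1 => //; clear -X4; lia.
  have a1' : a = 1 by clear -a0 a1; lia.
  subst a.
  case: (ltngtP b 2) => [b1|b3|b2].
  - have b1' : b = 1 by clear -b1 ab; lia.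
    subst b; move: hu; rewrite /U bad_11 //; clear -bc; lia.
  - have Q4 : 4 <= 2 ^ (b - 1).
      by rewrite -[4]/(2 ^ 2) leq_pexp2l //; clear -b3; lia.
    rewrite ec eb eca in hPR hN.
    set Q := 2 ^ (b - 1) in Q4 Qp hPR hN *.
    set P := 2 ^ (c - b) in Pp hPR hN *.
    rewrite (_ : 2 ^ 1 = 1 + 1) // in hPR hN.
    by apply: (gen_k _ Qp Pp _ hN hPR) => //; apply: key2.
  - subst b.
    have h12 := bad_12 (ltnW bc).
    rewrite -/U ec in h12; rewrite ec in hPR.
    move: hPR h12; rewrite eca.
    have e1 : 2 ^ (2 - 1) = 2 by [].
    have e2 : 2 ^ 1 = 2 by [].
    have e3 : 2 ^ 2 = 4 by [].
    rewrite e1 ?e2 e3.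
    move: (2 ^ (c - 2)) => P; clear; lia.
have n3 : 3 <= n by clear -hn nn2; lia.
have [m em] : exists m, n = m + 3 by exists (n - 3); clear -n3; lia.
have [ltab|eab] : a < b \/ a = b by clear -ab; lia.
2:{
  subst b.
  rewrite subnn expn0 muln1 in ec; rewrite ec in hPR.
  have h := bad_eq n a c; rewrite -/U ec in h.
  case: (leqP 2 a) => [a2|a1].
    have Xn2 : n ^ 2 <= n ^ a by rewrite leq_pexp2l.
    set X := n ^ a in Xn Xn2 h hPR *; set P := n ^ (c - a) in Pp h hPR *.
    have X1 : 1 <= X by clear -Xn n0; lia.
    have eX : X = (X - 1) + 1 by clear -X1; lia.
    rewrite eX in h hPR.
    rewrite em.
    apply: (eqcase (W := X - 1) _ Pp h hPR).
    have : (m + 3) * 2 <= (m + 3) * (m + 3) by rewrite leq_mul2l; clear; lia.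
    rewrite expnS expn1 em in Xn2; clear -Xn2; lia.
  have a1' : a = 1 by clear -a0 a1; lia.
  subst a.
  have h1 := bad_eq1 hn (leq_trans a0 bc); rewrite -/U ec in h1.
  set P := n ^ (c - 1) in Pp h1 hPR *.
  rewrite expn1 em in h1 hPR *.
  exact: (eqcase1 Pp h1 hPR).
}
have Qn : n <= n ^ (b - a) by rewrite -{1}(expn1 n) leq_pexp2l //; clear -ltab; lia.
rewrite ec eb eca in hPR hN.
set X := n ^ a in Xn hPR hN *; set Q := n ^ (b - a) in Qn Qp hPR hN *.
set P := n ^ (c - b) in Pp hPR hN *.
have eX : X = (X - 1) + 1 by clear -Xn n0; lia.
rewrite eX in hPR hN.
rewrite (_ : n - 2 = m + 1); last by clear -em; lia.
rewrite em; apply: (gen_k _ Qp Pp _ hN hPR); first by clear -Xn n3; lia.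
apply: key3; clear -em Xn Qn; lia.
Qed.

Unset Implicit Arguments.

Definition G n a b c := 0 < #|UD3 n a b c| -> (alpha n < rho3 n a b c)%R.

Lemma G12 n a b c : G n b a c -> G n a b c.
Proof. by rewrite /G /rho3 UD12 PR12. Qed.
Lemma G23 n a b c : G n a c b -> G n a b c.
Proof. by rewrite /G /rho3 UD23 PR23. Qed.

Theorem theorem4 (n a b c : nat) :
  (2 <= n)%N -> (0 < a)%N -> (0 < b)%N -> (0 < c)%N ->
  UD3 n a b c != set0 ->
  (alpha n < rho3 n a b c)%R.
Proof.
move=> hn ha hb hc hne.
have hu : 0 < #|UD3 n a b c| by rewrite card_gt0.
move: hu; rewrite -/(G n a b c).
case: (leqP a b) => ab; case: (leqP b c) => bc; case: (leqP a c) => ac.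
- by apply: main_sorted; lia.
- by apply: main_sorted; lia.
- by apply: G23; apply: main_sorted; lia.
- by apply: G23; apply: G12; apply: main_sorted; lia.
- by apply: G12; apply: main_sorted; lia.
- by apply: G12; apply: G23; apply: main_sorted; lia.
- by apply: G12; apply: G23; apply: main_sorted; lia.
- by apply: G12; apply: G23; apply: G12; apply: main_sorted; lia.
Qed.
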